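(* Let $x,y\in\{0,1\}^\infty$ be independent sequences, both with randomness rate $\tau>0$; let $0<\sigma<\tau$, $0<\sigma'<\tau-\sigma$, $b=\lceil(1-\sigma)/\sigma'\rceil$, let $a$ be a positive integer, and let $t_0=0$, $t_1=a$, $t_i=b(t_1+\cdots+t_{i-1})$ for $i\ge2$. Let $\bar{x}_i=x(1:t_i)$ and $\bar{y}_i=y(1:t_i)$. Then there is a constant $c$ such that for all $i,j\ge1$: (a) $\big|K(\bar{y}_i\bar{x}_j)-\big(K(\bar{y}_i)+K(\bar{x}_j)\big)\big|\le c(i+j)$; (b) $\big|K(\bar{x}_i\bar{y}_j)-\big(K(\bar{x}_i)+K(\bar{y}_j)\big)\big|\le c(i+j)$.
   Context: $x(n_1:n_2)$ denotes bits $n_1$ through $n_2$ of $x$ (indexed from 1); juxtaposition is concatenation. $K(u)$ is plain Kolmogorov complexity with respect to a fixed universal machine. A sequence has randomness rate $\tau$ if $K(x(1:n))\ge\tau n$ for all but finitely many $n$. Sequences $x,y$ are independent if there is a constant $c_0$ with $K(x(1:n)y(1:m))\ge K(x(1:n))+K(y(1:m))-c_0(1+\log n+\log m)$ for all $n,m\ge1$. *)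

(* Defs.v *)
From Stdlib Require Import ClassicalEpsilon.
From mathcomp Require Import all_boot all_order all_algebra.
From mathcomp Require Import reals.
Set Implicit Arguments. Unset Strict Implicit. Unset Printing Implicit Defensive.

(* Model of computation: register (Minsky) machines over nat.             *)
Inductive instr : Type :=
| INC of nat
| DEC of nat & nat.

Definition program := seq instr.

Definition state := (nat * (nat -> nat))%type.

Definition upd (r : nat -> nat) (k v : nat) : nat -> nat :=
  fun i => if i == k then v else r i.

Definition step (p : program) (s : state) : state :=
  let: (pc, r) := s in
  match nth (INC 0) p pc with
  | INC k => (pc.+1, upd r k (r k).+1)
  | DEC k j => if r k is n.+1 then (pc.+1, upd r k n) else (j, r)
  end.

Fixpoint run (p : program) (fuel : nat) (s : state) : option (nat -> nat) :=
  if size p <= s.1 then Some s.2 else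
  match fuel with
  | 0 => None
  | n.+1 => run p n (step p s)
  end.

(* bijective binary coding of bit strings by naturals *)
Fixpoint code (s : seq bool) : nat :=
  match s with
  | [::] => 0
  | b :: s' => (code s').*2 + 1 + b
  end.

Definition init (w : seq bool) : state := (0, fun i => if i == 0 then code w else 0).

(* program e on input w halts with output v (input and output in register 0) *)
Definition outputs (e : program) (w v : seq bool) : Prop :=
  exists fuel r, run e fuel (init w) = Some r /\ r 0 = code v.

(* u is a universal (additively optimal) machine: for every machine e
   there is a constant c with K_u(v) <= K_e(v) + c for all v. *)
Definition universal (u : program) : Prop :=
  forall e : program, exists c : nat, forall w v : seq bool,
    outputs e w v -> exists q : seq bool, outputs u q v /\ size q <= size w + c.

Definition K (u : program) (v : seq bool) : nat :=
  epsilon (inhabits 0%N) (fun n : nat =>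
    (exists q, outputs u q v /\ size q = n) /\
    (forall q, outputs u q v -> n <= size q)).

(* Infinite sequences: x : nat -> bool, with paper's bit k stored at x (k-1). *)
Definition xpref (x : nat -> bool) (n : nat) : seq bool := mkseq x n.

Local Open Scope ring_scope.

Definition has_rate (R : realType) (u : program) (tau : R) (x : nat -> bool) : Prop :=
  exists N : nat, forall n : nat, (N <= n)%N -> tau * n%:R <= (K u (xpref x n))%:R.

Definition independent (u : program) (x y : nat -> bool) : Prop :=
  exists c0 : nat, forall n m : nat, (1 <= n)%N -> (1 <= m)%N ->
    (K u (xpref x n ++ xpref y m))%:Z >=
      (K u (xpref x n))%:Z + (K u (xpref y m))%:Z
      - (c0 * (1 + trunc_log 2 n + trunc_log 2 m))%:Z.

(* Main.v *)
Require Import Defs.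
From mathcomp Require Import all_boot all_order all_algebra.
From mathcomp Require Import reals.
From mathcomp Require Import zify.
From HB Require Import structures.
From Stdlib Require Import FunctionalExtensionality ClassicalEpsilon Classical.
Set Implicit Arguments. Unset Strict Implicit. Unset Printing Implicit Defensive.

Definition instr_eqb (i j : instr) := match i, j with
 | INC a, INC b => a == b | DEC a c, DEC b d => (a == b) && (c == d) | _, _ => false end.
Lemma instr_eqP : Equality.axiom instr_eqb.
Proof.
case=> [a|a c] [b|b d] /=; try by constructor.
- by apply: (iffP eqP) => [->|[]].
- apply: (iffP andP) => [[/eqP -> /eqP ->]|[-> ->]] //.
Qed.
HB.instance Definition _ := hasDecEq.Build instr instr_eqP.

Inductive reach (p : program) : state -> state -> Prop :=
| reach0 s : reach p s s
| reachS s s' : s.1 < size p -> reach p (step p s) s' -> reach p s s'.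

Lemma reach_trans p s1 s2 s3 : reach p s1 s2 -> reach p s2 s3 -> reach p s1 s3.
Proof. elim=> // s s' h _ IH h2. apply: reachS h (IH h2). Qed.

Definition exec (p : program) (x y : nat -> nat) :=
  exists pc, reach p (0, x) (pc, y) /\ size p <= pc.

Lemma reach_run p s s' : reach p s s' -> size p <= s'.1 ->
  exists fuel, run p fuel s = Some s'.2.
Proof.
elim=> [[pc y]|s0 s1 hlt _ IH] hs.
- exists 0. by rewrite /= hs.
- have [f hf] := IH hs. exists f.+1. by rewrite /= leqNgt hlt.
Qed.

Lemma run_reach p fuel s y : run p fuel s = Some y ->
  exists pc, reach p s (pc, y) /\ size p <= pc.
Proof.
elim: fuel s => [|f IH] s /=; case: ifP => h.
- case=> <-; exists s.1; split=> //; case: s {h} => ? ?; exact: reach0.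
- done.
- case=> <-; exists s.1; split=> //; case: s {h} => ? ?; exact: reach0.
- move=> /IH [pc [h1 h2]]; exists pc; split=> //; apply: reachS h1; by rewrite ltnNge h.
Qed.

Lemma exec_outputs e w v y : exec e (init w).2 y -> y 0 = code v -> outputs e w v.
Proof.
move=> [pc [h1 h2]] hy. have [f hf] := reach_run h1 h2. by exists f, y.
Qed.

Lemma outputs_exec e w v : outputs e w v -> exists y, exec e (init w).2 y /\ y 0 = code v.
Proof.
move=> [f [r [h1 h2]]]. have [pc [h3 h4]] := run_reach h1. by exists r; split=> //; exists pc.
Qed.

Definition shi (o : nat) (i : instr) := match i with INC k => INC k | DEC k j => DEC k (j + o) end.
Definition shift o (p : program) := map (shi o) p.
Definition cat (p q : program) := p ++ shift (size p) q.

Lemma size_shift o p : size (shift o p) = size p.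
Proof. by rewrite size_map. Qed.

Lemma step_mid A Q C pc x : pc < size Q ->
  step (A ++ shift (size A) Q ++ C) (size A + pc, x) =
  let: (pc', x') := step Q (pc, x) in (size A + pc', x').
Proof.
move=> h. rewrite /step nth_cat ltnNge leq_addr /= addKn nth_cat size_shift h.
rewrite (nth_map (INC 0)) //. case: (nth (INC 0) Q pc) => [k|k j] /=.
- by rewrite addnS.
- case: (x k) => [|n]; first by rewrite addnC. by rewrite addnS.
Qed.

Lemma reach_mid A Q C pc x pc' y : reach Q (pc, x) (pc', y) ->
  reach (A ++ shift (size A) Q ++ C) (size A + pc, x) (size A + pc', y).
Proof.
move=> h; move: h (erefl (pc, x)) (erefl (pc', y)).
move: {1 3}(pc, x) {1 3}(pc', y) => s s' h.
elim: h pc x pc' y => [s0|s0 s1 hlt _ IH] pc x pc' y E1 E2.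
- subst. case: E2 => -> ->. exact: reach0.
- subst. apply: reachS.
  + move: hlt; rewrite /= !size_cat size_shift; lia.
  + rewrite step_mid //. case E: (step Q (pc, x)) => [a b]. apply: IH => //.
Qed.

Lemma reach_pre P C s s' : reach P s s' -> reach (P ++ C) s s'.
Proof.
elim=> [s0|s0 s1 hlt _ IH]; first exact: reach0.
apply: reachS. by rewrite size_cat ltn_addr.
suff ->: step (P ++ C) s0 = step P s0 by [].
case: s0 hlt {IH} => pc x /= hlt. by rewrite /step nth_cat hlt.
Qed.

Definition wfi n (i : instr) := match i with INC _ => true | DEC _ j => j <= n end.
Definition wf (p : program) := all (wfi (size p)) p.

Lemma step_wf p s : wf p -> s.1 < size p -> (step p s).1 <= size p.
Proof.
rewrite /wf => /allP hw. case: s => pc x /= h. rewrite /step.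
have hin : nth (INC 0) p pc \in p by apply: mem_nth.
move: (hw _ hin). case: (nth (INC 0) p pc) => [k|k j] /= hj //. case: (x k) => //.
Qed.

Lemma reach_wf p s s' : wf p -> s.1 <= size p -> reach p s s' -> s'.1 <= size p.
Proof. move=> hw + h. elim: h => // s0 s1 hlt _ IH _. apply: IH. exact: step_wf. Qed.

Lemma exec_wf p x y : wf p -> exec p x y -> reach p (0, x) (size p, y).
Proof.
move=> hw [pc [h1 h2]]. have := reach_wf hw _ h1. move=> /(_ (leq0n _)) /= h3.
have -> : size p = pc by apply/eqP; rewrite eqn_leq h2 h3. done.
Qed.

Lemma exec_cat P Q x y z : wf P -> exec P x y -> exec Q y z -> exec (cat P Q) x z.
Proof.
move=> hw h1 [pc [h2 h3]]. exists (size P + pc); split; last first.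
  by rewrite /cat size_cat size_shift leq_add2l.
apply: reach_trans.
  have := reach_pre (shift (size P) Q) (exec_wf hw h1). exact.
have := @reach_mid P Q [::] 0 y pc z h2. by rewrite cats0 addn0.
Qed.

Lemma wf_cat P Q : wf P -> wf Q -> wf (cat P Q).
Proof.
rewrite /wf => /allP h1 /allP h2. apply/allP => i. rewrite /cat mem_cat size_cat size_shift.
case/orP=> [hi|/mapP [i' hi' ->]].
- move: (h1 _ hi). case: i {hi} => //= k j hj. lia.
- move: (h2 _ hi'). case: i' {hi'} => //= k j hj. lia.
Qed.

Notation Z := 1.
Definition modi (i : instr) : seq nat :=
  match i with INC k => [:: k] | DEC k _ => if k == Z then [::] else [:: k] end.
Definition mods (p : program) : seq nat := flatten (map modi p).

Lemma mods_cat P Q : mods (cat P Q) = mods P ++ mods Q.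
Proof.
rewrite /mods /cat map_cat flatten_cat /shift -map_comp. congr (_ ++ flatten _).
apply: eq_map => -[] //.
Qed.

Lemma upd_eq x k v : upd x k v k = v. Proof. by rewrite /upd eqxx. Qed.
Lemma upd_neq x k v j : j != k -> upd x k v j = x j. Proof. by rewrite /upd => /negbTE ->. Qed.

Lemma reach_frame p s s' : reach p s s' -> s.2 Z = 0 -> Z \notin mods p ->
  forall z, z \notin mods p -> s'.2 z = s.2 z.
Proof.
elim=> // s0 s1 hlt _ IH hz hZ z hzm.
have key : forall w, w \notin mods p -> (step p s0).2 w = s0.2 w.
  move=> w hw. case: s0 hlt hz {IH} => pc x /= hlt hz. rewrite /step.
  have hin : nth (INC 0) p pc \in p by apply: mem_nth.
  have sub : forall v, v \in modi (nth (INC 0) p pc) -> v \in mods p.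
    move=> v hv. apply/flattenP. exists (modi (nth (INC 0) p pc)) => //. by apply: map_f.
  case E: (nth (INC 0) p pc) sub => [k|k j] sub /=.
  - apply: upd_neq. apply: contraNneq hw => ->. apply: sub. by rewrite inE.
  - case Ex: (x k) => [|n] //=. apply: upd_neq.
    apply: contraNneq hw => ->. apply: sub. rewrite /=. case: eqP => hk.
      by move: hz; rewrite -hk Ex.
    by rewrite inE.
rewrite IH //; first exact: key. by rewrite key.
Qed.

Lemma exec_frame p x y : exec p x y -> x Z = 0 -> Z \notin mods p ->
  forall z, z \notin mods p -> y z = x z.
Proof. move=> [pc [h _]] hz hZ z hzm. exact: (reach_frame h). Qed.

Ltac updt := let z := fresh "z" in apply: functional_extensionality => z;
  rewrite /upd; repeat (case: eqP => ?); subst; try lia.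
Ltac zt := rewrite /upd; repeat (case: eqP => ?); subst; try lia.

Lemma exec_eq P x y y' : exec P x y -> y = y' -> exec P x y'.
Proof. by move=> h <-. Qed.

Definition while r body := [:: DEC r (size body + 3); INC r] ++ shift 2 body ++ [:: DEC Z 0].

Lemma wf_while r body : wf body -> wf (while r body).
Proof.
rewrite /wf /while => /allP h. apply/allP => i.
rewrite !size_cat size_shift /= !inE mem_cat => /or3P [/eqP->|/eqP->|/orP [/mapP [i' hi ->]|]] //=.
- rewrite /=; lia.
- move: (h _ hi); case: i' {hi} => //= k j; lia.
- by rewrite inE => /eqP ->.
Qed.

Lemma mods_while r body : mods (while r body) = modi (DEC r 0) ++ r :: mods body.
Proof.
rewrite /mods /while /= /shift map_cat flatten_cat -map_comp /=.
have -> : [seq (modi \o shi 2) i | i <- body] = [seq modi i | i <- body] by apply: eq_map=> -[].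
by rewrite /= cats0 /=.
Qed.

Lemma while_rule r body (Inv : nat -> (nat -> nat) -> Prop) :
  wf body -> r != Z ->
  (forall n x, Inv n x -> x Z = 0 -> x r != 0 ->
     exists m y, m < n /\ Inv m y /\ y Z = 0 /\ exec body x y) ->
  forall n x, Inv n x -> x Z = 0 ->
     exists m y, Inv m y /\ y r = 0 /\ y Z = 0 /\ exec (while r body) x y.
Proof.
move=> hw hr hb. elim/ltn_ind => n IH x hI hz.
case Ex: (x r) => [|k].
- exists n, x; do 3 split=> //. exists (size body + 3); split; last by rewrite /while !size_cat size_shift /=; lia.
  apply: reachS => //. rewrite /step /= Ex. exact: reach0.
- have [m [y [hmn [hIy [hyz hex]]]]] := hb n x hI hz ltac:(by rewrite Ex).
  have [m' [w [hIw [hw1 [hw2 hexw]]]]] := IH m hmn y hIy hyz.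
  exists m', w; do 3 split=> //. case: hexw => pc [hr1 hr2]. exists pc; split=> //.
  apply: reachS => //. rewrite /step /= Ex.
  apply: reachS => //. rewrite /step /=.
  have -> : upd (upd x r k) r (upd x r k r).+1 = x by updt.
  have := @reach_mid [:: DEC r (size body + 3); INC r] body [:: DEC Z 0] 0 x (size body) y (exec_wf hw hex).
  rewrite /= => h1. apply: reach_trans h1 _.
  apply: reachS. rewrite /= /while !size_cat size_shift /=; lia.
  have -> : step (while r body) (2 + size body, y) = (0, y).
    rewrite /step /while /= nth_cat size_shift add0n ltnn subnn /= hyz /Z /=. done.
  done.
Qed.

Lemma while_fun a body (G : nat -> nat -> nat) N : wf body -> a != Z ->
  (forall n, n <= N -> G n a = n) -> (forall n, n <= N -> G n Z = 0) ->
  (forall n, n < N -> exec body (G n.+1) (G n)) -> exec (while a body) (G N) (G 0).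
Proof.
move=> hw ha hGa hGZ hb.
have := @while_rule a body (fun m y => m <= N /\ y = G m) hw ha _ N (G N) (conj (leqnn N) erefl) (hGZ _ (leqnn N)).
case.
- move=> n y [hn ->] _ hne. have hn0 : 0 < n by move: hne; rewrite hGa //; case: (n) {hn}.
  exists n.-1, (G n.-1). split; first lia. split; first (split; [lia|done]). split.
  + by rewrite hGZ //; lia.
  + rewrite -{1}(prednK hn0); apply: hb; lia.
- move=> m [y [[hm ->] [hy [_ hex]]]]. by move: hy hex; rewrite hGa // => ->.
Qed.

Definition dec r : program := [:: DEC r 1].
Definition inc r : program := [:: INC r].

Lemma wf_dec r : wf (dec r). Proof. by []. Qed.
Lemma wf_inc r : wf (inc r). Proof. by []. Qed.

Lemma exec_dec r x : exec (dec r) x (upd x r (x r).-1).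
Proof.
exists 1; split=> //. apply: reachS => //. rewrite /step /=.
case E: (x r) => [|n] /=; last exact: reach0.
have -> : upd x r 0 = x by updt. exact: reach0.
Qed.

Lemma exec_inc r x : exec (inc r) x (upd x r (x r).+1).
Proof. exists 1; split=> //. apply: reachS => //. exact: reach0. Qed.

Definition clr r := while r (dec r).
Definition mv a b := while a (cat (dec a) (inc b)).
Definition mv2 a b c := while a (cat (dec a) (cat (inc b) (inc c))).
Definition dbl a b := while a (cat (dec a) (cat (inc b) (inc b))).

Lemma wf_clr r : wf (clr r). Proof. exact: wf_while. Qed.
Lemma wf_mv a b : wf (mv a b). Proof. apply: wf_while; exact: wf_cat. Qed.
Lemma wf_mv2 a b c : wf (mv2 a b c). Proof. apply: wf_while; apply: wf_cat => //; exact: wf_cat. Qed.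
Lemma wf_dbl a b : wf (dbl a b). Proof. apply: wf_while; apply: wf_cat => //; exact: wf_cat. Qed.

Lemma exec_clr r x : r != Z -> x Z = 0 -> exec (clr r) x (upd x r 0).
Proof.
move=> hr hz.
have := @while_fun r (dec r) (fun n => upd x r n) (x r) (wf_dec r) hr.
have -> : upd x r (x r) = x by updt.
apply.
- move=> n _; by rewrite upd_eq.
- move=> n _; zt.
- move=> n _ /=. have h := exec_dec r (upd x r n.+1). apply: (exec_eq h). updt.
Qed.

Lemma exec_mv a b x : a != Z -> b != Z -> a != b -> x Z = 0 ->
  exec (mv a b) x (upd (upd x b (x b + x a)) a 0).
Proof.
move=> ha hb hab hz.
have := @while_fun a (cat (dec a) (inc b)) (fun n => upd (upd x b (x b + (x a - n))) a n) (x a)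
  (wf_cat (wf_dec _) (wf_inc _)) ha.
have -> : upd (upd x b (x b + (x a - x a))) a (x a) = x by updt.
rewrite subn0. apply.
- move=> n _; by rewrite upd_eq.
- move=> n _; zt.
- move=> n hn /=. apply: exec_cat; first exact: wf_dec.
  + exact: exec_dec.
  + eapply exec_eq; first exact: exec_inc. updt.
Qed.

Lemma exec_mv2 a b c x : a != Z -> b != Z -> c != Z -> a != b -> a != c -> b != c -> x Z = 0 ->
  exec (mv2 a b c) x (upd (upd (upd x b (x b + x a)) c (x c + x a)) a 0).
Proof.
move=> ha hb hc hab hac hbc hz.
have := @while_fun a (cat (dec a) (cat (inc b) (inc c)))
  (fun n => upd (upd (upd x b (x b + (x a - n))) c (x c + (x a - n))) a n) (x a)
  (wf_cat (wf_dec _) (wf_cat (wf_inc _) (wf_inc _))) ha.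
have -> : upd (upd (upd x b (x b + (x a - x a))) c (x c + (x a - x a))) a (x a) = x by updt.
rewrite subn0. apply.
- move=> n _; by rewrite upd_eq.
- move=> n _; zt.
- move=> n hn /=. apply: exec_cat; first exact: wf_dec.
  + exact: exec_dec.
  + apply: exec_cat; first exact: wf_inc. exact: exec_inc.
    eapply exec_eq; first exact: exec_inc. updt.
Qed.

Lemma exec_dbl a b x : a != Z -> b != Z -> a != b -> x Z = 0 ->
  exec (dbl a b) x (upd (upd x b (x b + (x a).*2)) a 0).
Proof.
move=> ha hb hab hz.
have := @while_fun a (cat (dec a) (cat (inc b) (inc b)))
  (fun n => upd (upd x b (x b + (x a - n).*2)) a n) (x a)
  (wf_cat (wf_dec _) (wf_cat (wf_inc _) (wf_inc _))) ha.
have -> : upd (upd x b (x b + (x a - x a).*2)) a (x a) = x by updt.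
rewrite subn0. apply.
- move=> n _; by rewrite upd_eq.
- move=> n _; zt.
- move=> n hn /=. apply: exec_cat; first exact: wf_dec.
  + exact: exec_dec.
  + apply: exec_cat; first exact: wf_inc. exact: exec_inc.
    eapply exec_eq; first exact: exec_inc. updt.
Qed.

Definition halve a b p : program := [:: DEC a 5; DEC a 4; INC b; DEC Z 0; INC p].
Lemma wf_halve a b p : wf (halve a b p). Proof. by []. Qed.

Lemma exec_halve a b p x : a != Z -> b != Z -> p != Z -> a != b -> a != p -> b != p -> x Z = 0 ->
  exec (halve a b p) x (upd (upd (upd x b (x b + (x a)./2)) p (x p + odd (x a))) a 0).
Proof.
move=> ha hb hp hab hap hbp.
suff: forall n x, x a = n -> x Z = 0 ->
  exec (halve a b p) x (upd (upd (upd x b (x b + n./2)) p (x p + odd n)) a 0).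
  by move=> h hz; exact: h.
elim/ltn_ind => n IH {}x Ea hz.
case: n IH Ea => [|[|n]] IH Ea.
- exists 5; split=> //. apply: reachS => //. rewrite /step /= Ea.
  have -> : upd (upd (upd x b (x b + 0)) p (x p + 0)) a 0 = x by updt.
  exact: reach0.
- exists 5; split=> //. apply: reachS => //. rewrite /step /= Ea.
  apply: reachS => //. rewrite /step /= upd_eq.
  apply: reachS => //. rewrite /step /=.
  have -> : upd (upd (upd x b (x b + 0)) p (x p + 1)) a 0 = upd (upd x a 0) p (upd x a 0 p).+1 by updt.
  exact: reach0.
- have [x3 hx3] : exists x3, x3 = upd (upd (upd x a n.+1) a n) b ((upd (upd x a n.+1) a n b).+1) by eexists.
  have h3a : x3 a = n by rewrite hx3; zt.
  have h3z : x3 Z = 0 by rewrite hx3; zt.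
  case: (IH n (ltnW (ltnSn _)) x3 h3a h3z) => pc [hr hs].
  exists pc; split=> //.
  apply: reachS => //. rewrite /step /= Ea.
  apply: reachS => //. rewrite /step /= upd_eq.
  apply: reachS => //. rewrite /step /=.
  apply: reachS => //. rewrite /step /= -hx3 h3z.
  have -> : upd (upd (upd x b (x b + n.+2./2)) p (x p + odd n.+2)) a 0 =
            upd (upd (upd x3 b (x3 b + n./2)) p (x3 p + odd n)) a 0.
    rewrite hx3. have -> : n.+2./2 = (n./2).+1 by [].
    rewrite /=. updt.
  exact: hr.
Qed.

Ltac zt2 := try (unfold upd); repeat (case: eqP => ?); subst; try lia.
#[global] Hint Resolve wf_cat wf_clr wf_mv wf_mv2 wf_dbl wf_halve wf_dec wf_inc wf_while : wfdb.
Ltac wfa := auto 20 with wfdb.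
Ltac sspec L := eapply exec_cat; [wfa | eapply L; zt2 | ].
Ltac lspec L := eapply exec_eq; [eapply L; zt2 | ].

Definition pop c B T := cat (clr T) (cat (clr B) (cat (dec c) (cat (halve c T B) (mv T c)))).
Lemma wf_pop c B T : wf (pop c B T). Proof. rewrite /pop; wfa. Qed.

Lemma exec_pop c B T x : c != Z -> B != Z -> T != Z -> c != B -> c != T -> B != T -> x Z = 0 ->
  exec (pop c B T) x (upd (upd (upd x T 0) B (odd (x c).-1)) c ((x c).-1./2)).
Proof.
move=> *. rewrite /pop.
sspec exec_clr. sspec exec_clr. sspec exec_dec. sspec exec_halve. lspec exec_mv. updt.
Qed.

Definition push c B T := cat (clr T) (cat (dbl c T) (cat (inc T) (cat (mv B T) (mv T c)))).
Lemma wf_push c B T : wf (push c B T). Proof. rewrite /push; wfa. Qed.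

Lemma exec_push c B T x : c != Z -> B != Z -> T != Z -> c != B -> c != T -> B != T -> x Z = 0 ->
  exec (push c B T) x (upd (upd (upd x T 0) B 0) c ((x c).*2 + 1 + x B)).
Proof.
move=> *. rewrite /push.
sspec exec_clr. sspec exec_dbl. sspec exec_inc. sspec exec_mv. lspec exec_mv. updt.
Qed.

Lemma code0 s : (code s == 0) = (s == [::]).
Proof. by case: s => //= b s; rewrite addn1 addSn. Qed.

Lemma code_pred b s : (code (b :: s)).-1 = (code s).*2 + b.
Proof. by rewrite /= addn1 addSn. Qed.

Lemma odd_db n (b : bool) : odd (n.*2 + b) = b.
Proof. by rewrite oddD odd_double; case: b. Qed.

Lemma half_db n (b : bool) : (n.*2 + b)./2 = n.
Proof. by rewrite addnC half_bit_double. Qed.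

Lemma pred_db n m : (n.*2 + 1 + m).-1 = n.*2 + m.
Proof. by rewrite addn1 addSn. Qed.
Lemma odd_dbn n m : odd (n.*2 + m) = odd m.
Proof. by rewrite oddD odd_double. Qed.
Lemma half_dbn n m : (n.*2 + m)./2 = n + m./2.
Proof. by rewrite halfD odd_double /= doubleK. Qed.

Lemma neqF_sym (a b : nat) : a != b -> (b == a) = false.
Proof. by rewrite eq_sym => /negbTE. Qed.
Ltac simpr := repeat match goal with
 | H : is_true (?a != ?b) |- context [?a == ?b] => rewrite (negbTE H)
 | H : is_true (?a != ?b) |- context [?b == ?a] => rewrite (neqF_sym H)
 | |- context [?a == ?a] => rewrite eqxx
 end; rewrite /=.
Ltac updc := let z := fresh "z" in apply: functional_extensionality => z;
  unfold upd; simpr;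
  repeat (match goal with |- context [z == ?r] => case: (z =P r) => [?|?]; try subst z; simpr end);
  rewrite ?code_pred ?half_db ?odd_db ?pred_db ?odd_dbn ?half_dbn /= ?addn0 ?subn0 ?add0n; try done.
Ltac zs := unfold upd; simpr; try done; try assumption.
Ltac sspec2 L := eapply exec_cat; [wfa | eapply L; zs | ].


Definition revapp src dst B T := cat (clr B) (cat (clr T) (while src (cat (pop src B T) (push dst B T)))).
Lemma wf_revapp src dst B T : wf (revapp src dst B T).
Proof. rewrite /revapp; auto 20 with wfdb. Qed.
#[global] Hint Resolve wf_pop wf_push wf_revapp : wfdb.

Lemma exec_revapp src dst B T x s d :
  src != Z -> dst != Z -> B != Z -> T != Z -> src != dst -> src != B -> src != T ->
  dst != B -> dst != T -> B != T -> x Z = 0 -> x src = code s -> x dst = code d ->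
  exec (revapp src dst B T) x (upd (upd (upd (upd x B 0) T 0) src 0) dst (code (catrev s d))).
Proof.
move=> h1 h2 h3 h4 h5 h6 h7 h8 h9 h10 hz hs hd. rewrite /revapp.
sspec2 exec_clr. sspec2 exec_clr.
pose S a c := upd (upd (upd (upd x B 0) T 0) src a) dst c.
have := @while_rule src (cat (pop src B T) (push dst B T))
  (fun m y => exists s1 d1, m = size s1 /\ catrev s1 d1 = catrev s d /\ y = S (code s1) (code d1))
  ltac:(wfa) h1 _ (size s) (S (code s) (code d)) _ _.
case.
- move=> n y [s1 [d1 [-> [hc ->]]]] hyz hne.
  case: s1 hc hne hyz => [|b s1] hc hne hyz; first by move: hne; rewrite /S upd_neq // upd_eq.
  exists (size s1), (S (code s1) (code (b :: d1))). split=> //. split.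
    by exists s1, (b :: d1).
  split; first by rewrite /S; zs.
  eapply exec_cat; [wfa| eapply exec_pop; rewrite ?/S; zs|].
  eapply exec_eq; [eapply exec_push; rewrite ?/S; zs|]. rewrite /S. updc.
- by exists s, d.
- rewrite /S; zs.
- move=> m [y [[s1 [d1 [_ [hc ->]]]] [hy0 [_ hex]]]].
  move: hy0 hex. rewrite /S upd_neq ?upd_eq // => /eqP. rewrite code0 => /eqP hs1.
  move: hc; rewrite hs1 /= => ->. move=> hex. have E : S (code s) (code d) = upd (upd x B 0) T 0 by rewrite /S; updc.
  rewrite -E; apply: (exec_eq hex). rewrite /S; updc.
Qed.

Definition revK N src dst B T := cat (clr B) (cat (clr T)
  (while N (cat (dec N) (cat (pop src B T) (push dst B T))))).
Lemma wf_revK N src dst B T : wf (revK N src dst B T).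
Proof. rewrite /revK; auto 20 with wfdb. Qed.
#[global] Hint Resolve wf_revK : wfdb.

Lemma catrev_rcons (t : seq bool) b d : catrev (rcons t b) d = b :: catrev t d.
Proof. by rewrite !catrevE rev_rcons. Qed.

Lemma exec_revK N src dst B T x k s d :
  N != Z -> src != Z -> dst != Z -> B != Z -> T != Z -> src != dst -> src != B -> src != T ->
  dst != B -> dst != T -> B != T -> N != src -> N != dst -> N != B -> N != T ->
  x Z = 0 -> x N = k -> k <= size s -> x src = code s -> x dst = code d ->
  exec (revK N src dst B T) x
    (upd (upd (upd (upd (upd x B 0) T 0) N 0) src (code (drop k s))) dst (code (catrev (take k s) d))).
Proof.
move=> h0 h1 h2 h3 h4 h5 h6 h7 h8 h9 h10 h11 h12 h13 h14 hz hk hks hs hd. rewrite /revK.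
sspec2 exec_clr. sspec2 exec_clr.
pose S n a c := upd (upd (upd (upd (upd x B 0) T 0) N n) src a) dst c.
have := @while_rule N (cat (dec N) (cat (pop src B T) (push dst B T)))
  (fun m y => m <= k /\ y = S m (code (drop (k - m) s)) (code (catrev (take (k - m) s) d)))
  ltac:(wfa) h0 _ k (S k (code (drop (k - k) s)) (code (catrev (take (k - k) s) d))) _ _.
case.
- move=> n y [hn ->] hyz hne.
  have hn0 : 0 < n by move: hne; rewrite /S upd_neq // upd_neq // upd_eq; case: (n).
  have hlt : k - n < size s by clear -hn hn0 hks; lia.
  exists n.-1, (S n.-1 (code (drop (k - n.-1) s)) (code (catrev (take (k - n.-1) s) d))).
  split; first by clear -hn0; lia. split; first (split; [clear -hn; lia|done]). split; first by rewrite /S; zs.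
  have E1 : k - n.-1 = (k - n).+1 by clear -hn hn0 hks; lia.
  rewrite E1 (drop_nth false hlt) (take_nth false hlt) catrev_rcons.
  sspec2 exec_dec.
  eapply exec_cat; [wfa| eapply exec_pop; rewrite ?/S; zs|].
  eapply exec_eq; [eapply exec_push; rewrite ?/S; zs|]. rewrite /S. updc.
- by rewrite subnn.
- rewrite /S; zs.
- move=> m [y [[hm ->] [hy0 [_ hex]]]].
  have hm0 : m = 0 by move: hy0; rewrite /S upd_neq // upd_neq // upd_eq.
  move: hex; rewrite hm0 subn0 subnn drop0 take0 /= => hex.
  have E : S k (code s) (code d) = upd (upd x B 0) T 0 by rewrite /S; updc.
  rewrite -E; apply: (exec_eq hex). rewrite /S; updc.
Qed.

Definition count K FL src B T := cat (clr B) (cat (clr T) (cat (clr K) (cat (clr FL) (cat (inc FL)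
  (while FL (cat (dec FL) (cat (pop src B T) (mv2 B K FL)))))))).
Lemma wf_count K FL src B T : wf (count K FL src B T).
Proof. rewrite /count; auto 30 with wfdb. Qed.
#[global] Hint Resolve wf_count : wfdb.

Lemma exec_count K FL src B T x k s :
  K != Z -> FL != Z -> src != Z -> B != Z -> T != Z ->
  K != FL -> K != src -> K != B -> K != T -> FL != src -> FL != B -> FL != T ->
  src != B -> src != T -> B != T ->
  x Z = 0 -> x src = code (nseq k true ++ false :: s) ->
  exec (count K FL src B T) x
    (upd (upd (upd (upd (upd x B 0) T 0) K k) FL 0) src (code s)).
Proof.
move=> h1 h2 h3 h4 h5 h6 h7 h8 h9 h10 h11 h12 h13 h14 h15 hz hs. rewrite /count.
sspec2 exec_clr. sspec2 exec_clr. sspec2 exec_clr. sspec2 exec_clr. sspec2 exec_inc.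
pose S kk fl c := upd (upd (upd (upd (upd x B 0) T 0) K kk) FL fl) src c.
have := @while_rule FL (cat (dec FL) (cat (pop src B T) (mv2 B K FL)))
  (fun m y => (exists j, m = j.+1 /\ j <= k /\ y = S (k - j) 1 (code (nseq j true ++ false :: s)))
              \/ (m = 0 /\ y = S k 0 (code s)))
  ltac:(wfa) h2 _ k.+1 (S (k - k) 1 (code (nseq k true ++ false :: s))) _ _.
case.
- move=> n y [[j [-> [hj ->]]]|[-> ->]] hyz hne; last first.
    by move: hne; rewrite /S upd_neq // upd_eq.
  case: j hj hyz hne => [|j] hj hyz hne.
  + exists 0, (S k 0 (code s)). split=> //. split; first by right.
    split; first by rewrite /S; zs.
    sspec2 exec_dec. rewrite /=.
    eapply exec_cat; [wfa| eapply exec_pop; rewrite ?/S; zs|].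
    eapply exec_eq; [eapply exec_mv2; rewrite ?/S; zs|]. rewrite /S. updc.
  + exists j.+1, (S (k - j) 1 (code (nseq j true ++ false :: s))). split=> //. split.
      left; exists j; split=> //; split=> //; clear -hj; lia.
    split; first by rewrite /S; zs.
    sspec2 exec_dec. rewrite /=.
    eapply exec_cat; [wfa| eapply exec_pop; rewrite ?/S; zs|].
    eapply exec_eq; [eapply exec_mv2; rewrite ?/S; zs|]. rewrite /S. updc. clear -hj; lia.
- cbv beta; left; exists k; split=> //; split=> //.
- rewrite /S; zs.
- move=> m [y [[[j [_ [_ ->]]]|[_ ->]] [hy0 [_ hex]]]].
    by move: hy0; rewrite /S upd_neq // upd_eq.
  have E : S (k - k) 1 (code (nseq k true ++ false :: s)) =
    upd (upd (upd (upd (upd x B 0) T 0) K 0) FL 0) FL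
      ((upd (upd (upd (upd x B 0) T 0) K 0) FL 0) FL).+1 by rewrite /S subnn; updc.
  rewrite -E; apply: (exec_eq hex). rewrite /S; updc.
Qed.

Definition take_ N src dst ACC B T :=
  cat (clr ACC) (cat (revK N src ACC B T) (cat (clr dst) (revapp ACC dst B T))).
Lemma wf_take N src dst ACC B T : wf (take_ N src dst ACC B T).
Proof. rewrite /take_; auto 30 with wfdb. Qed.
#[global] Hint Resolve wf_take : wfdb.

Lemma exec_take N src dst ACC B T x k s :
  N != Z -> src != Z -> dst != Z -> ACC != Z -> B != Z -> T != Z ->
  N != src -> N != dst -> N != ACC -> N != B -> N != T ->
  src != dst -> src != ACC -> src != B -> src != T ->
  dst != ACC -> dst != B -> dst != T -> ACC != B -> ACC != T -> B != T ->
  x Z = 0 -> x N = k -> k <= size s -> x src = code s ->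
  exec (take_ N src dst ACC B T) x
    (upd (upd (upd (upd (upd (upd x ACC 0) B 0) T 0) N 0) src (code (drop k s))) dst (code (take k s))).
Proof.
move=> *. rewrite /take_.
sspec2 exec_clr.
eapply exec_cat; [wfa| eapply (@exec_revK _ _ _ _ _ _ k s [::]); zs|].
sspec2 exec_clr.
eapply exec_eq; [eapply (@exec_revapp _ _ _ _ _ (catrev (take k s) [::]) [::]); zs|].
rewrite !catrevE !cats0 seq.revK. updc.
Qed.

Fixpoint bitsf f m : seq bool :=
  match f with 0 => [::] | f'.+1 => if m is m'.+1 then odd m' :: bitsf f' m'./2 else [::] end.
Definition bits m := bitsf m m.

Lemma code_bitsf f m : m <= f -> code (bitsf f m) = m.
Proof.
elim: f m => [|f IH] [|m] //= h. rewrite IH; last first.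
  have := odd_double_half m. move: h. rewrite -!muln2. lia.
have := odd_double_half m. rewrite -!muln2. lia.
Qed.

Lemma code_bits m : code (bits m) = m.
Proof. exact: code_bitsf. Qed.

Definition enc m := nseq (size (bits m)) true ++ false :: bits m.

Ltac unq H := rewrite /= !inE !negb_or in H;
  repeat match goal with h : is_true (_ && _) |- _ =>
    let a := fresh "hd" in let b := fresh "hd" in case/andP: h => a b end.

Definition parse target K FL ACC src B T := cat (count K FL src B T) (take_ K src target ACC B T).
Lemma wf_parse target K FL ACC src B T : wf (parse target K FL ACC src B T).
Proof. rewrite /parse; auto 30 with wfdb. Qed.
#[global] Hint Resolve wf_parse : wfdb.

Lemma exec_parse target K FL ACC src B T x m r :
  uniq [:: target; K; FL; ACC; src; B; T; Z] ->
  x Z = 0 -> x src = code (enc m ++ r) ->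
  exec (parse target K FL ACC src B T) x
    (upd (upd (upd (upd (upd (upd (upd x B 0) T 0) K 0) FL 0) ACC 0) src (code r)) target m).
Proof.
move=> H hz hx. unq H. rewrite /parse.
eapply exec_cat; [wfa| eapply (@exec_count _ _ _ _ _ _ (size (bits m)) (bits m ++ r)); zs|].
  by rewrite hx /enc -catA.
eapply exec_eq; [eapply (@exec_take _ _ _ _ _ _ _ (size (bits m)) (bits m ++ r)); zs|].
  by rewrite size_cat leq_addr.
rewrite take_size_cat // drop_size_cat // code_bits. updc.
Qed.

Definition reli o n (i : instr) := match i with INC k => INC (k + o) | DEC k j => DEC (k + o) (minn j n) end.
Definition reloc o (u : program) := map (reli o (size u)) u.

Lemma size_reloc o u : size (reloc o u) = size u. Proof. by rewrite size_map. Qed.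

Lemma wf_reloc o u : wf (reloc o u).
Proof.
rewrite /wf size_reloc. apply/allP => i /mapP [i' _ ->]. case: i' => //= k j. exact: geq_minr.
Qed.

Lemma reach_reloc o u s s' : reach u s s' -> size u <= s'.1 ->
  forall X, (forall k, s.2 k = X (k + o)) ->
  exists X', reach (reloc o u) (minn s.1 (size u), X) (size u, X') /\ forall k, s'.2 k = X' (k + o).
Proof.
elim=> [[pc r]|[pc r] s1 hlt _ IH] /= hs X hX.
- exists X. have -> : minn pc (size u) = size u by apply/minn_idPr.
  split=> //; exact: reach0.
- rewrite /= in hlt.
  have [X1 [st hX1]] : exists X1, step (reloc o u) (pc, X) = (minn (step u (pc, r)).1 (size u), X1) /\
      forall k, (step u (pc, r)).2 k = X1 (k + o).
    rewrite /step (nth_map (INC 0)) //.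
    case: (nth (INC 0) u pc) => [k|k j] /=.
    + exists (upd X (k + o) (X (k + o)).+1). split.
        by congr pair; apply/esym/minn_idPl.
      move=> k'. rewrite /upd eqn_add2r. by case: eqP => _; rewrite ?hX.
    + rewrite -hX. case: (r k) => [|n] /=.
        by exists X.
      exists (upd X (k + o) n). split; first by congr pair; apply/esym/minn_idPl.
      move=> k'. rewrite /upd eqn_add2r. by case: eqP => _; rewrite ?hX.
  have [X' [hr hX']] := IH hs X1 hX1.
  exists X'; split=> //. have -> : minn pc (size u) = pc by apply/minn_idPl/ltnW.
  apply: reachS; first by rewrite size_reloc.
  by rewrite st.
Qed.

Definition regof (i : instr) := match i with INC k => k | DEC k _ => k end.
Definition M (u : program) := foldr (fun i m => maxn (regof i).+1 m) 0 u.

Lemma regof_M u i : i \in u -> regof i < M u.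
Proof.
elim: u => //= i' u IH. rewrite inE => /orP [/eqP ->|h].
- by rewrite leq_max leqnn.
- by rewrite leq_max (IH h) orbT.
Qed.

Lemma mods_reloc o u z : 2 <= o -> z \in mods (reloc o u) -> o <= z < o + M u.
Proof.
move=> ho /flattenP [l /mapP [i /mapP [i' hi' ->] ->] hz].
have := regof_M hi'. case: i' hi' hz => [k|k j] _ /=.
- rewrite inE => /eqP -> h. lia.
- have -> : (k + o == 1) = false by apply/negbTE; lia.
  rewrite inE => /eqP -> h. lia.
Qed.

Lemma exec_reloc o u p v X : outputs u p v -> X o = code p -> (forall k, 0 < k -> X (k + o) = 0) ->
  exists X', exec (reloc o u) X X' /\ X' o = code v.
Proof.
move=> /outputs_exec [y [[pc [hr hs]] hy]] hXo hX0.
have hX : forall k, (init p).2 k = X (k + o).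
  case=> [|k] /=; first by rewrite hXo.
  by rewrite hX0.
have [X' [hr' hX']] := @reach_reloc o u _ _ hr hs X hX.
exists X'; split; last by rewrite -hy; move: (hX' 0); rewrite /= add0n.
exists (size u); split; last by rewrite size_reloc.
by rewrite /= min0n in hr'.
Qed.

Ltac zs3 := unfold upd; simpr; rewrite ?catrevE ?cats0 ?seq.revK; try done; try assumption; try lia.
(* registers: 0 io, 1 Z, 2 B, 3 T, 4 K, 5 FL, 6 ACC, 7 RN, 8 RL, 9 RP, 10 RO1, 11 RO2, 12 RT, 13 o1 *)
Definition G3 o2 :=
  cat (clr 10) (cat (mv 13 10) (cat (clr 11) (cat (mv o2 11)
  (cat (clr 6) (cat (revapp 10 6 2 3) (cat (revapp 6 11 2 3)
  (cat (take_ 7 11 12 6 2 3)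
  (cat (clr 6) (cat (revapp 11 6 2 3) (cat (revapp 6 12 2 3)
  (cat (clr 0) (mv 12 0)))))))))))).
Lemma wf_G3 o2 : wf (G3 o2). Proof. rewrite /G3; auto 40 with wfdb. Qed.

Lemma exec_G3 o2 y v1 v2 n : 13 < o2 -> y Z = 0 -> y 13 = code v1 -> y o2 = code v2 -> y 7 = n ->
  n <= size (v1 ++ v2) ->
  exists y', exec (G3 o2) y y' /\ y' 0 = code (rot n (v1 ++ v2)).
Proof.
move=> ho hz h1 h2 hn hle.
have ? : o2 != 0 by lia.
have ? : o2 != 1 by lia.
have ? : o2 != 2 by lia.
have ? : o2 != 3 by lia.
have ? : o2 != 4 by lia.
have ? : o2 != 5 by lia.
have ? : o2 != 6 by lia.
have ? : o2 != 7 by lia.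
have ? : o2 != 8 by lia.
have ? : o2 != 9 by lia.
have ? : o2 != 10 by lia.
have ? : o2 != 11 by lia.
have ? : o2 != 12 by lia.
have ? : o2 != 13 by lia.
eexists; split.
  eapply exec_cat; [wfa | eapply exec_clr; zs3 | ]. eapply exec_cat; [wfa | eapply exec_mv; zs3 | ]. eapply exec_cat; [wfa | eapply exec_clr; zs3 | ]. eapply exec_cat; [wfa | eapply exec_mv; zs3 | ]. eapply exec_cat; [wfa | eapply exec_clr; zs3 | ].
  eapply exec_cat; [wfa| eapply (@exec_revapp _ _ _ _ _ v1 [::]); zs3|].
  eapply exec_cat; [wfa| eapply (@exec_revapp _ _ _ _ _ (catrev v1 [::]) v2); zs3|].
  eapply exec_cat; [wfa| eapply (@exec_take _ _ _ _ _ _ _ n (v1 ++ v2)); zs3|].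
  eapply exec_cat; [wfa | eapply exec_clr; zs3 | ].
  eapply exec_cat; [wfa| eapply (@exec_revapp _ _ _ _ _ (drop n (v1 ++ v2)) [::]); zs3|].
  eapply exec_cat; [wfa| eapply (@exec_revapp _ _ _ _ _ (catrev (drop n (v1 ++ v2)) [::]) (take n (v1 ++ v2))); zs3|].
  eapply exec_cat; [wfa | eapply exec_clr; zs3 | ]. eapply exec_mv; zs3.
by rewrite /upd /= !catrevE !cats0 seq.revK /rot.
Qed.

Definition G1 := cat (parse 7 4 5 6 0 2 3) (cat (parse 8 4 5 6 0 2 3) (cat (take_ 8 0 9 6 2 3) (mv 9 13))).
Lemma wf_G1 : wf G1. Proof. rewrite /G1; auto 40 with wfdb. Qed.

Lemma exec_G1 x n p q : x Z = 0 -> x 0 = code (enc n ++ enc (size p) ++ p ++ q) ->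
  exists y, exec G1 x y /\ y 7 = n /\ y 13 = x 13 + code p /\ y 0 = code q /\
    (forall z, 13 < z -> y z = x z) /\ y Z = 0.
Proof.
move=> hz hx. eexists; split.
  eapply exec_cat; [wfa| eapply (@exec_parse _ _ _ _ _ _ _ _ n (enc (size p) ++ p ++ q)); zs3|].
  eapply exec_cat; [wfa| eapply (@exec_parse _ _ _ _ _ _ _ _ (size p) (p ++ q)); zs3|].
  eapply exec_cat; [wfa| eapply (@exec_take _ _ _ _ _ _ _ (size p) (p ++ q)); zs3|].
    by rewrite size_cat leq_addr.
  eapply exec_mv; zs3.
rewrite take_size_cat // drop_size_cat //.
split; first by rewrite /upd.
split; first by rewrite /upd /= addnC.
split; first by rewrite /upd.
split; last by rewrite /upd.
move=> z hz13. rewrite /upd. repeat (case: eqP => ?); try lia.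
Qed.

Definition o2 u := 14 + M u.
Definition Gm u := cat G1 (cat (reloc 13 u) (cat (mv 0 (o2 u)) (cat (reloc (o2 u) u) (G3 (o2 u))))).

Lemma frame_reloc o u x y z : 2 <= o -> exec (reloc o u) x y -> x Z = 0 ->
  (z < o \/ o + M u <= z) -> y z = x z.
Proof.
move=> ho he hz hzr. apply: (exec_frame he hz).
- apply/negP => /(mods_reloc ho). lia.
- apply/negP => /(mods_reloc ho). lia.
Qed.

Lemma Gm_out u p q v1 v2 n : outputs u p v1 -> outputs u q v2 -> n <= size (v1 ++ v2) ->
  outputs (Gm u) (enc n ++ enc (size p) ++ p ++ q) (rot n (v1 ++ v2)).
Proof.
move=> hp hq hn.
set w := enc n ++ enc (size p) ++ p ++ q.
set x0 := (init w).2.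
have hx0 : forall z, z != 0 -> x0 z = 0 by move=> z hz; rewrite /x0 /= (negbTE hz).
have [y1 [e1 [h17 [h113 [h10 [h1f h1z]]]]]] := @exec_G1 x0 n p q (hx0 1 isT) erefl.
rewrite hx0 // add0n in h113.
have [y2 [e2 h213]] := @exec_reloc 13 u p v1 y1 hp h113 ltac:(by move=> k hk; rewrite h1f ?hx0 //; lia).
have f2 := fun z => @frame_reloc 13 u y1 y2 z isT e2 h1z.
set y3 := upd (upd y2 (o2 u) (y2 (o2 u) + y2 0)) 0 0.
have e3 : exec (mv 0 (o2 u)) y2 y3.
  apply: exec_mv => //; rewrite /o2; try lia. rewrite f2 //; lia.
have h3z : y3 Z = 0 by rewrite /y3 /upd /o2 /= f2 //; lia.
have E1 : y2 (o2 u) = 0.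
  rewrite f2; last (rewrite /o2; lia). rewrite h1f; last (rewrite /o2; lia).
  apply: hx0. rewrite /o2; lia.
have E2 : y2 0 = code q by rewrite f2 //; lia.
have h3o : y3 (o2 u) = code q by rewrite /y3 /upd eqxx E1 E2.
have H3 : forall k, 0 < k -> y3 (k + o2 u) = 0.
  move=> k hk. rewrite /y3 /upd /o2.
  have -> : (k + (14 + M u) == 0) = false by apply/negbTE; lia.
  have -> : (k + (14 + M u) == 14 + M u) = false by apply/negbTE; lia.
  rewrite f2; last lia. rewrite h1f; last lia. apply: hx0; lia.
have [y4 [e4 h4o]] := @exec_reloc (o2 u) u q v2 y3 hq h3o H3.
have f4 := fun z => @frame_reloc (o2 u) u y3 y4 z isT e4 h3z.
have N13 : (13 == o2 u) = false by apply/negbTE; rewrite /o2; lia.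
have N7 : (7 == o2 u) = false by apply/negbTE; rewrite /o2; lia.
have H13 : y4 13 = code v1.
  rewrite f4; last (rewrite /o2; lia). by rewrite /y3 /upd N13 /=.
have H7 : y4 7 = n.
  rewrite f4; last (rewrite /o2; lia). rewrite /y3 /upd N7 /= f2; [exact: h17| lia].
have H4z : y4 Z = 0 by rewrite f4 //; rewrite /o2; lia.
have [y5 [e5 h5]] := @exec_G3 (o2 u) y4 v1 v2 n ltac:(rewrite /o2; lia) H4z H13 h4o H7 hn.
apply: (exec_outputs (y := y5)) => //.
apply: exec_cat; first exact: wf_G1. exact: e1.
apply: exec_cat; first exact: wf_reloc. exact: e2.
apply: exec_cat; first exact: wf_mv. exact: e3.
apply: exec_cat; first exact: wf_reloc. exact: e4.
exact: e5.
Qed.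

Lemma outputs_id w : outputs [::] w w.
Proof. by exists 0, (init w).2. Qed.

Lemma least_ex (Q : nat -> Prop) : (exists n, Q n) -> exists n, Q n /\ forall m, Q m -> n <= m.
Proof.
move=> [n hn]. elim/ltn_ind: n hn => n IH hn.
case: (classic (exists m, Q m /\ m < n)) => [[m [hm hmn]]|h].
- exact: IH hm.
- exists n; split=> // m hm. rewrite leqNgt. apply/negP => hmn. apply: h. by exists m.
Qed.

Section KU.
Variable u : program.
Hypothesis hu : universal u.

Lemma some_prog v : exists q, outputs u q v.
Proof. have [c hc] := hu [::]. have [q [hq _]] := hc v v (outputs_id v). by exists q. Qed.

Lemma K_spec v : (exists q, outputs u q v /\ size q = K u v) /\ (forall q, outputs u q v -> K u v <= size q).
Proof.
pose P n := (exists q, outputs u q v /\ size q = n) /\ (forall q, outputs u q v -> n <= size q).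
have hP : exists n, P n.
  have [q hq] := some_prog v.
  have [n [[q' [h1 h2]] hmin]] := @least_ex (fun n => exists q, outputs u q v /\ size q = n) (ex_intro _ (size q) (ex_intro _ q (conj hq erefl))).
  exists n; split; first by exists q'.
  move=> q0 h0. apply: hmin. by exists q0.
exact: (epsilon_spec (inhabits 0%N) P hP).
Qed.

Lemma K_min v q : outputs u q v -> K u v <= size q.
Proof. exact: (K_spec v).2. Qed.

Lemma K_opt v : exists q, outputs u q v /\ size q = K u v.
Proof. exact: (K_spec v).1. Qed.

Lemma K_size : exists c, forall v, K u v <= size v + c.
Proof.
have [c hc] := hu [::]. exists c => v.
have [q [hq hs]] := hc v v (outputs_id v). by apply: leq_trans (K_min hq) hs.
Qed.

Lemma K_rot : exists c, forall p q v1 v2 n, outputs u p v1 -> outputs u q v2 -> n <= size (v1 ++ v2) ->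
  K u (rot n (v1 ++ v2)) <= size (enc n) + size (enc (size p)) + size p + size q + c.
Proof.
have [c hc] := hu (Gm u). exists c => p q v1 v2 n hp hq hn.
have [q' [h1 h2]] := hc _ _ (Gm_out hp hq hn).
apply: leq_trans (K_min h1) _. move: h2. rewrite !size_cat. lia.
Qed.
End KU.

Lemma code_size s : 2 ^ size s <= (code s).+1.
Proof. elim: s => //= b s IH. rewrite expnS. case: b => /=; rewrite -!muln2; lia. Qed.

Lemma size_bits m : size (bits m) <= trunc_log 2 m.+1.
Proof. apply: trunc_log_max => //. by rewrite -{2}(code_bits m) code_size. Qed.

Lemma size_enc m : size (enc m) <= (trunc_log 2 m.+1).*2.+1.
Proof. rewrite /enc size_cat size_nseq /=. have := size_bits m. rewrite -!muln2. lia. Qed.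

Lemma enc_le m N : m.+1 <= N -> size (enc m) <= (trunc_log 2 N).*2.+1.
Proof. move=> h. apply: leq_trans (size_enc m) _. have := leq_trunc_log 2 h. rewrite -!muln2. lia. Qed.

Lemma two_sided u : universal u -> exists C, forall s t,
  K u (s ++ t) <= K u s + K u t + C * (trunc_log 2 (size s + size t + C)).+1 /\
  forall E, K u t + K u s <= K u (t ++ s) + E ->
    K u s + K u t <= K u (s ++ t) + E + C * (trunc_log 2 (size s + size t + C)).+1.
Proof.
move=> hu. have [cI hI] := K_size hu. have [cR hR] := K_rot hu.
set C := cI + cR + K u [::] + 10.
exists C => s t. set Lam := trunc_log 2 (size s + size t + C).
have hCL : C <= C * Lam.+1 by rewrite -{1}(muln1 C) leq_mul2l ltnS leq0n orbT.
have hCL2 : C * Lam.+1 = C * Lam + C by rewrite mulnS addnC.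
have hLam : Lam <= C * Lam by rewrite leq_pmull // /C; lia.
split.
- have [p [hp hps]] := K_opt hu s. have [q [hq hqs]] := K_opt hu t.
  have := hR p q s t 0 hp hq (leq0n _). rewrite rot0 hps hqs => h.
  apply: leq_trans h _.
  have h1 : size (enc 0) = 1 by [].
  have h2 : size (enc (K u s)) <= Lam.*2.+1.
    apply: enc_le. have := hI s. rewrite /C. lia.
  rewrite h1. move: h2 hCL hCL2 hLam. rewrite /C -!muln2. lia.
- move=> E hE.
  have [p [hp hps]] := K_opt hu (s ++ t). have [q [hq hqs]] := K_opt hu [::].
  have := hR p q (s ++ t) [::] (size s) hp hq ltac:(rewrite !size_cat; lia).
  rewrite cats0 rot_size_cat hps hqs => h.
  have h1 : size (enc (size s)) <= Lam.*2.+1 by apply: enc_le; rewrite /C; lia.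
  have h2 : size (enc (K u (s ++ t))) <= Lam.*2.+1.
    apply: enc_le. have := hI (s ++ t). rewrite size_cat /C. lia.
  move: h h1 h2 hE hCL hCL2 hLam. rewrite /C -!muln2. lia.
Qed.

Import Order.TTheory GRing.Theory Num.Theory.

Lemma absz_le (A B N : nat) : (A <= B + N)%N -> (B <= A + N)%N -> (`|(A%:Z - B%:Z)| <= N%:Z)%R.
Proof. move=> h1 h2. rewrite ler_norml. apply/andP; split; lia. Qed.

Lemma tl_lt X k : 0 < X -> X < 2 ^ k -> trunc_log 2 X < k.
Proof.
move=> h0 h. have := trunc_logP (isT : 1 < 2) h0. move=> h2.
have : 2 ^ trunc_log 2 X < 2 ^ k by apply: leq_ltn_trans h2 h.
by rewrite ltn_exp2l.
Qed.

Lemma tgrowth (a b : nat) (t : nat -> nat) : t 1 = a ->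
  (forall i : nat, (2 <= i)%N -> t i = (b * \sum_(1 <= k < i) t k)%N) ->
  forall i, 0 < i -> t i <= a * (b + 1) ^ i.
Proof.
move=> ht1 hti.
have hS : forall i, 0 < i -> \sum_(1 <= k < i.+1) t k <= a * (b + 1) ^ i.
  elim=> // i IH _. case: i IH => [|i] IH.
    rewrite big_nat1 ht1 expn1. by rewrite leq_pmulr // addn1.
  rewrite big_nat_recr //= (hti i.+2) // expnS.
  have := IH isT. set S := \sum_(1 <= k < i.+2) t k. move=> h.
  have : S + b * S = (b + 1) * S by rewrite mulnDl mul1n addnC.
  move=> ->. rewrite mulnCA. by rewrite leq_mul2l h orbT.
move=> i hi. apply: leq_trans (hS i hi). rewrite big_nat_recr //=. exact: leq_addl.
Qed.

Lemma size_xpref z n : size (xpref z n) = n. Proof. exact: size_mkseq. Qed.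
Lemma xpref0 z : xpref z 0 = [::]. Proof. by []. Qed.

Local Open Scope ring_scope.

Theorem lemma4p5 (R : realType) (u : program) (hu : universal u)
  (x y : nat -> bool) (tau sigma sigma' : R) (a b : nat) (t : nat -> nat)
  (hxy : independent u x y)
  (htau : 0 < tau) (hx : has_rate u tau x) (hy : has_rate u tau y)
  (hsigma : 0 < sigma) (hsigmatau : sigma < tau)
  (hsigma' : 0 < sigma') (hsigma'tau : sigma' < tau - sigma)
  (hb : b%:Z = Num.ceil ((1 - sigma) / sigma'))
  (ha : (0 < a)%N)
  (ht0 : t 0%N = 0%N) (ht1 : t 1%N = a)
  (hti : forall i : nat, (2 <= i)%N -> t i = (b * \sum_(1 <= k < i) t k)%N) :
  exists c : nat, forall i j : nat, (1 <= i)%N -> (1 <= j)%N ->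
    `| (K u (xpref y (t i) ++ xpref x (t j)))%:Z
        - ((K u (xpref y (t i)))%:Z + (K u (xpref x (t j)))%:Z) |
      <= (c * (i + j))%:Z
    /\
    `| (K u (xpref x (t i) ++ xpref y (t j)))%:Z
        - ((K u (xpref x (t i)))%:Z + (K u (xpref y (t j)))%:Z) |
      <= (c * (i + j))%:Z.
Proof.
have [C hC] := two_sided hu.
case: hxy => c0 hc0.
have indep : forall n m, (0 < n)%N -> (0 < m)%N ->
  (K u (xpref x n) + K u (xpref y m) <= K u (xpref x n ++ xpref y m) + c0 * (1 + trunc_log 2 n + trunc_log 2 m))%N.
  move=> n m hn hm. have := hc0 n m hn hm. lia.
have tb := @tgrowth a b t ht1 hti.
set KE := K u [::].
set E := (2 * a + C + 1)%N. set F := (b + 1)%N.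
exists ((2 * c0 + C + KE + 1) * (E + F))%N.
move=> i j hi hj.
set n := t i. set m := t j.
set Lam0 := trunc_log 2 (n + m + C).
set Lam := trunc_log 2 (n + m + C).+1.
have hL0 : (Lam0 <= Lam)%N by apply: leq_trunc_log.
have hCL : (C * Lam0.+1 <= C * Lam.+1)%N by rewrite leq_mul2l ltnS hL0 orbT.
have hL : (Lam.+1 <= (E + F) * (i + j))%N.
  rewrite /Lam. apply: tl_lt; first by lia.
  have h1 : (n <= a * F ^ (i + j))%N.
    apply: leq_trans (tb i hi) _. apply: leq_mul => //. apply: leq_pexp2l; first by rewrite /F addn1.
    by rewrite leq_addr.
  have h2 : (m <= a * F ^ (i + j))%N.
    apply: leq_trans (tb j hj) _. apply: leq_mul => //. apply: leq_pexp2l; first by rewrite /F addn1.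
    by rewrite leq_addl.
  have h3 : (F ^ (i + j) <= 2 ^ (F * (i + j)))%N.
    rewrite expnM leq_exp2r; last by lia. exact: ltnW (@ltn_expl 2 F isT).
  have h4 : (E < 2 ^ E)%N by apply: ltn_expl.
  have h5 : ((n + m + C).+1 < 2 ^ E * 2 ^ (F * (i + j)))%N.
    have h6 : (1 <= F ^ (i + j))%N by rewrite expn_gt0 /F addn1.
    have h7 : ((n + m + C).+1 <= E * F ^ (i + j))%N.
      move: h1 h2 h6. rewrite /E. generalize (F ^ (i + j))%N => P. nia.
    have h8 : (E * F ^ (i + j) <= E * 2 ^ (F * (i + j)))%N by apply: leq_mul.
    have h9 : (E * 2 ^ (F * (i + j)) < 2 ^ E * 2 ^ (F * (i + j)))%N.
      by rewrite ltn_mul2r h4 andbT expn_gt0.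
    move: h7 h8 h9. lia.
  apply: (leq_trans h5). rewrite -expnD leq_exp2l // mulnDl. nia.
have hLn : (trunc_log 2 n <= Lam)%N by apply: leq_trunc_log; lia.
have hLm : (trunc_log 2 m <= Lam)%N by apply: leq_trunc_log; lia.
have hfin : forall A B D : nat, (A <= B + D)%N -> (B <= A + D)%N ->
    (D <= (2 * c0 + C + KE + 1) * Lam.+1)%N ->
    `| A%:Z - B%:Z | <= (((2 * c0 + C + KE + 1) * (E + F))%N * (i + j))%:Z.
  move=> A B D h1 h2 h3.
  have h4 : (D <= (2 * c0 + C + KE + 1) * (E + F) * (i + j))%N.
    apply: leq_trans h3 _. rewrite -mulnA leq_mul2l hL orbT //.
  by apply: absz_le; lia.
have hKE : forall s, K u ([::] ++ s) = (K u s + 0)%N by move=> s; rewrite addn0.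
split.
- rewrite -PoszD.
  have [hup hlow] := hC (xpref y n) (xpref x m).
  rewrite !size_xpref -/Lam0 in hup hlow.
  case: (posnP n) => hn0.
    rewrite hn0 xpref0 /= -/KE. apply: (hfin _ _ KE); lia.
  case: (posnP m) => hm0.
    rewrite hm0 xpref0 cats0 -/KE. apply: (hfin _ _ KE); lia.
  have := hlow _ (indep m n hm0 hn0) => h.
  apply: (hfin _ _ (c0 * (1 + trunc_log 2 m + trunc_log 2 n) + C * Lam.+1)); try lia.
  rewrite mulnDl. nia.
- rewrite -PoszD.
  have [hup _] := hC (xpref x n) (xpref y m).
  rewrite !size_xpref -/Lam0 in hup.
  case: (posnP n) => hn0.
    rewrite hn0 xpref0 /= -/KE. apply: (hfin _ _ KE); lia.
  case: (posnP m) => hm0.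
    rewrite hm0 xpref0 cats0 -/KE. apply: (hfin _ _ KE); lia.
  have h := indep n m hn0 hm0.
  apply: (hfin _ _ (c0 * (1 + trunc_log 2 n + trunc_log 2 m) + C * Lam.+1)); try lia.
  rewrite mulnDl. nia.
Qed.
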